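(* Let $m\ge1$. Every word $w$ over $\{a,b\}$ admits a factorization $w=w_1w_2w_3$ with $w_1\in L^{\epsilon}_{\vdash_{\{ba^m,a\}}}$, $w_2\in L^{\epsilon}_{\vdash_{\{ba^m,b\}}}$ and $|w_3|_a<m$, such that moreover, whenever $w$ belongs to the shuffle of $x$ copies of $ba^m$ and some word $w'$, one has $x\le |w_1|_b+|w_2|_a/m$.
   Context: For words $u,v$, the shuffle $u \sqcup\!\sqcup v$ is the set of all words $u_1v_1\cdots u_kv_k$ with $k\ge 1$, $u=u_1\cdots u_k$, $v=v_1\cdots v_k$ (pieces possibly empty); shuffles of several words are defined iteratively. For a finite set $I$ of words, $v \vdash_I w$ means $w \in v \sqcup\!\sqcup u$ for some $u\in I$; $\vdash_I^*$ is its reflexive-transitive closure and $L^{\epsilon}_{\vdash_I}=\{w : \epsilon \vdash_I^* w\}$. *)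

(* Defs.v *)
From mathcomp Require Import all_boot all_order all_algebra.
Set Implicit Arguments. Unset Strict Implicit. Unset Printing Implicit Defensive.

(* Alphabet {a,b} encoded as bool: a = true, b = false. *)
Definition la : bool := true.
Definition lb : bool := false.
Definition word := seq bool.

Definition occ (c : bool) (w : word) : nat := count_mem c w.

Definition shuffle (u v w : word) : Prop :=
  exists ps : seq (word * word),
    [/\ ps != [::],
        u = flatten (map fst ps),
        v = flatten (map snd ps) &
        w = flatten (map (fun p => p.1 ++ p.2) ps)].

(* Iterated shuffle: shuffles [:: u1; ...; un] w  <->  w ∈ (..(u1 ⧢ u2) ⧢ ..) ⧢ un,
   with the empty family giving {ε}. *)
Definition shuffles (ws : seq word) (w : word) : Prop :=
  foldl (fun (P : word -> Prop) u => fun w => exists z, P z /\ shuffle z u w)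
        (fun w => w = [::]) ws w.

Definition derives (I : seq word) (v w : word) : Prop :=
  exists2 u, u \in I & shuffle v u w.

Inductive Leps (I : seq word) : word -> Prop :=
| Leps_nil : Leps I [::]
| Leps_step v w : Leps I v -> derives I v w -> Leps I w.

Definition ba (m : nat) : word := lb :: nseq m la.

(* Main.v *)
Require Import Defs.
From mathcomp Require Import all_boot all_order all_algebra.
From mathcomp Require Import zify.
Import GRing.Theory Num.Theory.
Set Implicit Arguments. Unset Strict Implicit.

Inductive Il : word -> word -> word -> Prop :=
| Il0 : Il [::] [::] [::]
| Ill c z u w : Il z u w -> Il (c :: z) u (c :: w)
| Ilr c z u w : Il z u w -> Il z (c :: u) (c :: w).

Lemma Il_shuffle z u w : Il z u w -> shuffle z u w.
Proof.
elim=> {z u w} [|c z u w _ [ps [h1 h2 h3 h4]]|c z u w _ [ps [h1 h2 h3 h4]]].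
- by exists [:: ([::],[::])]; split.
- exists (([:: c],[::]) :: ps); split => //=; by rewrite ?h2 ?h3 ?h4.
- exists (([::],[:: c]) :: ps); split => //=; by rewrite ?h2 ?h3 ?h4.
Qed.

Lemma Il_nil_r z : Il z [::] z.
Proof. by elim: z => [|c z IH]; constructor. Qed.

Lemma Il_app p q : Il p q (p ++ q).
Proof.
elim: p => [|c p IH] /=; last by constructor.
by elim: q => [|c q IH]; constructor.
Qed.

Lemma Il_cat a b c a' b' c' : Il a b c -> Il a' b' c' -> Il (a++a') (b++b') (c++c').
Proof.
move=> H H'; elim: H => {a b c} //= c z u w _ IH; by constructor.
Qed.

Lemma shuffle_Il z u w : shuffle z u w -> Il z u w.
Proof.
case=> ps [_ -> -> ->]; elim: ps => [|[p q] ps IH] /=; first by constructor.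
exact: Il_cat (Il_app p q) IH.
Qed.


Lemma Il_count z u w c : Il z u w -> count_mem c w = count_mem c z + count_mem c u.
Proof. elim=> {z u w} //= d z u w _ ->; lia. Qed.

Lemma Il_split z u w : Il z u w -> forall n, exists nz nu, forall c,
  count_mem c (take n w) = count_mem c (take nz z) + count_mem c (take nu u) /\
  count_mem c (drop n w) = count_mem c (drop nz z) + count_mem c (drop nu u).
Proof.
move=> H; elim: H => {z u w} [|d z u w H IH|d z u w H IH] n.
- by exists 0, 0 => c; case: n.
- case: n => [|n].
    exists 0, 0 => c; rewrite !take0 !drop0 /=; split => //.
    by rewrite (Il_count c H) /=; lia.
  have [nz [nu E]] := IH n; exists nz.+1, nu => c /=; have [E1 E2] := E c.
  by rewrite E1 E2 addnA.
- case: n => [|n].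
    exists 0, 0 => c; rewrite !take0 !drop0 /=; split => //.
    by rewrite (Il_count c H) /= addnCA.
  have [nz [nu E]] := IH n; exists nz, nu.+1 => c /=; have [E1 E2] := E c.
  by rewrite E1 E2 addnCA.
Qed.

Definition Bnd m x (w : word) := forall n,
  x * m <= m * occ lb (take n w) + occ la (drop n w).

Lemma Bnd_sub m x z u w : Il z u w -> Bnd m x z -> Bnd m x w.
Proof.
move=> H B n; have [nz [nu E]] := Il_split H n.
have [E1 _] := E lb; have [_ E2] := E la.
rewrite /occ E1 E2 mulnDr; have := B nz; rewrite /occ; lia.
Qed.

Lemma Bnd_step m x z w : Il z (ba m) w -> Bnd m x z -> Bnd m x.+1 w.
Proof.
move=> H B n; have [nz [nu E]] := Il_split H n.
have [E1 _] := E lb; have [_ E2] := E la.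
have K : m <= m * occ lb (take nu (ba m)) + occ la (drop nu (ba m)).
  case: nu {E E1 E2} => [|nu] /=.
    by rewrite /occ /= count_nseq /= mul1n; lia.
  rewrite /occ /= mulnDr; lia.
rewrite /occ E1 E2 mulnDr; have := B nz; rewrite /occ in K *; lia.
Qed.

Lemma nseqSr T n (x : T) : nseq n.+1 x = rcons (nseq n x) x.
Proof. by elim: n => //= n <-. Qed.

Lemma shuffles_Bnd m x w : shuffles (nseq x (ba m)) w -> Bnd m x w.
Proof.
elim: x w => [|x IH] w.
  by rewrite /shuffles /= => -> n; case: n.
rewrite nseqSr /shuffles foldl_rcons => -[z [Hz Hs]].
exact: Bnd_step (shuffle_Il Hs) (IH _ Hz).
Qed.

Lemma shuffles_Bnd' m x w' w : shuffles (nseq x (ba m) ++ [:: w']) w -> Bnd m x w.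
Proof.
rewrite /shuffles foldl_cat /= => -[z [Hz Hs]].
exact: Bnd_sub (shuffle_Il Hs) (shuffles_Bnd Hz).
Qed.



Fixpoint debt1 (m : nat) d (w : word) := match w with [::] => d
  | c :: w' => debt1 m (if c then d.-1 else d + m) w' end.
Fixpoint ok2 (m : nat) s (w : word) := match w with [::] => true
  | c :: w' => if c then (0 < s) && ok2 m s.-1 w' else ok2 m (s + m) w' end.
Fixpoint fin2 (m : nat) s (w : word) := match w with [::] => s
  | c :: w' => fin2 m (if c then s.-1 else s + m) w' end.

Lemma debt1_cat (m : nat) d u v : debt1 m d (u ++ v) = debt1 m (debt1 m d u) v.
Proof. by elim: u d => //= c u IH d. Qed.

Lemma ok2_cat (m : nat) s u v : ok2 m s (u ++ v) = ok2 m s u && ok2 m (fin2 m s u) v.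
Proof. elim: u s => //= c u IH s; case: c => //; by rewrite IH andbA. Qed.

Lemma debt_le (m : nat) d s v : ok2 m s v -> debt1 m d v + s <= maxn d s + fin2 m s v.
Proof.
elim: v d s => [|c v IH] d s /=; first lia.
case: c => [/andP [Hs H]|H].
  have := IH d.-1 s.-1 H; lia.
have := IH (d + m) (s + m) H; lia.
Qed.

Definition I1 (m : nat) := [:: ba m; [:: la]].
Definition I2 (m : nat) := [:: ba m; [:: lb]].

Lemma Leps_ins I p q g : Leps I (p ++ q) -> g \in I -> Leps I (p ++ g ++ q).
Proof.
move=> H Hg; apply: Leps_step H _; exists g => //.
exists [:: (p, g); (q, [::])]; split => //=; by rewrite ?cats0 // catA.
Qed.

Lemma L1_gen (m : nat) w : Leps (I1 m) (w ++ nseq (debt1 m 0 w) la).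
Proof.
elim/last_ind: w => [|w c IH]; first exact: Leps_nil.
rewrite -cats1 debt1_cat /=; case: c.
  case E: (debt1 m 0 w) IH => [|d] IH /=.
    rewrite cats0; have := Leps_ins (g:=[:: la]) IH; rewrite /=; apply.
    by rewrite /I1 !inE eqxx orbT.
  by rewrite -catA.
have := Leps_ins (g:=ba m) IH.
rewrite -catA /= addnC nseqD; apply; by rewrite /I1 inE eqxx.
Qed.

Lemma L1_ok (m : nat) w : debt1 m 0 w = 0 -> Leps (I1 m) w.
Proof. by move=> E; have := L1_gen m w; rewrite E cats0. Qed.

Fixpoint rem_a k (w : word) := match w with [::] => [::]
  | c :: w' => if c && (0 < k) then rem_a k.-1 w' else c :: rem_a k w' end.

Lemma rem_ok2 (m : nat) w s k : ok2 m (s + k) w -> ok2 m s (rem_a k w).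
Proof.
elim: w s k => [|c w IH] s k //=; case: c => /=.
  case: k => [|k] /=.
    by rewrite addn0 => /andP [-> H] /=; apply: IH; rewrite addn0.
  by case/andP => _; rewrite addnS /= => H; apply: IH.
by rewrite addnAC => H; apply: IH.
Qed.

Lemma rem_Il w k : k <= count_mem la w -> Il (rem_a k w) (nseq k la) w.
Proof.
elim: w k => [|c w IH] k /=; first by rewrite leqn0 => /eqP ->; constructor.
case: c => /=.
  case: k => [|k] /= H; constructor; apply: IH => //.
by move=> H; constructor; apply: IH.
Qed.

Lemma rem_count w k : count_mem la (rem_a k w) = count_mem la w - k.
Proof.
elim: w k => [|c w IH] k //=; case: c => /=.
  case: k => [|k] /=; rewrite IH; first by rewrite !subn0.
  by rewrite add1n subSS.
by rewrite IH.
Qed.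

Lemma Leps_pre I g w : Leps I w -> g \in I -> Leps I (g ++ w).
Proof. by move=> H Hg; exact: (Leps_ins (p:=[::]) H Hg). Qed.

Lemma L2_nob (m : nat) w : count_mem la w = 0 -> Leps (I2 m) w.
Proof.
elim: w => [|c w IH]; first by constructor.
case: c => //= H; apply: (Leps_pre (g:=[:: lb])); first exact: IH.
by rewrite /I2 !inE eqxx orbT.
Qed.

Lemma L2_ok (m : nat) n w : 0 < m -> count_mem la w <= n -> ok2 m 0 w -> m %| count_mem la w -> Leps (I2 m) w.
Proof.
move=> hm; elim: n w => [|n IH] w Hn Hok Hd.
  by apply: L2_nob; lia.
have [E|Pos] := posnP (count_mem la w); first exact: L2_nob.
case: w Hn Hok Hd Pos => [|[] w0] //= Hn Hok Hd Pos.
have Hm : m <= count_mem la w0 by apply: dvdn_leq.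
apply: Leps_step (IH (rem_a m w0) _ _ _) _.
- rewrite rem_count; rewrite add0n in Hn Pos; move: Hn Pos Hm hm; set c := count_mem la w0; clear; lia.
- by apply: rem_ok2; rewrite add0n.
- by rewrite rem_count; apply: dvdn_sub.
exists (ba m); first by rewrite /I2 inE eqxx.
by apply: Il_shuffle; constructor; apply: rem_Il.
Qed.


Lemma decomp m w : 0 < m -> exists w1 w2 w3 : word,
  [/\ w = w1 ++ w2 ++ w3, debt1 m 0 w1 = 0, ok2 m 0 (w2 ++ w3),
      m %| count_mem la w2 & count_mem la w3 < m].
Proof.
move=> hm; elim/last_ind: w => [|w c [w1 [w2 [w3 [-> D O Dv C]]]]].
  by exists [::], [::], [::]; split.
rewrite -cats1; case: c.
  case E: (ok2 m 0 ((w2 ++ w3) ++ [:: true])).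
    case: (ltnP (count_mem la w3).+1 m) => Hc.
      exists w1, w2, (w3 ++ [:: true]); split => //; first by rewrite !catA.
        by rewrite catA.
      by rewrite count_cat /= addn1.
    exists w1, (w2 ++ w3 ++ [:: true]), [::]; split => //.
    - by rewrite !catA cats0.
    - by rewrite cats0 catA.
    - rewrite !count_cat /= addn0 addn1.
      have -> : (count_mem la w3).+1 = m by apply/eqP; rewrite eqn_leq Hc C.
      by rewrite dvdn_add ?dvdnn.
  exists (w1 ++ w2 ++ w3 ++ [:: true]), [::], [::]; split => //.
  - by rewrite /= cats0 !catA.
  - rewrite debt1_cat D catA debt1_cat /=.
    move: E; rewrite ok2_cat O /= andbT => /negbT; rewrite -leqNgt leqn0 => /eqP F.
    have := debt_le 0 O; rewrite F; lia.
exists w1, w2, (w3 ++ [:: false]); split => //.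
- by rewrite !catA.
- by rewrite catA ok2_cat O.
- by rewrite count_cat /= !addn0.
Qed.


Theorem lemma14 (m : nat) (hm : (1 <= m)%N) (w : word) :
  exists w1 w2 w3 : word,
    [/\ w = w1 ++ w2 ++ w3,
        Leps [:: ba m; [:: la]] w1,
        Leps [:: ba m; [:: lb]] w2,
        (occ la w3 < m)%N &
        forall (x : nat) (w' : word),
          shuffles (nseq x (ba m) ++ [:: w']) w ->
          ((x%:R : rat) <= (occ lb w1)%:R + (occ la w2)%:R / m%:R)%R].
Proof.
have [w1 [w2 [w3 [E D O Dv C]]]] := decomp w hm.
have O2 : ok2 m 0 w2 by move: O; rewrite ok2_cat => /andP[].
exists w1, w2, w3; split => //.
- exact: L1_ok D.
- exact: (L2_ok (n := count_mem la w2) hm (leqnn _) O2 Dv).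
move=> x w' Hs; have B := shuffles_Bnd' Hs (size w1).
rewrite E take_size_cat // drop_size_cat // /occ count_cat in B.
case/dvdnP: Dv => k Hk; rewrite Hk in B.
have Hx : x < count_mem lb w1 + k + 1.
  rewrite -(ltn_pmul2r hm) !mulnDl mul1n.
  move: B C; set b := count_mem lb w1; set c := count_mem la w3; move=> B C.
  rewrite mulnC; lia.
rewrite /occ Hk natrM mulfK; last by rewrite pnatr_eq0 -lt0n.
rewrite -natrD ler_nat; by rewrite addn1 ltnS in Hx.
Qed.
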